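(* Suppose the stochastic variational inequality in extensive form has at least one solution, and let $\{(x_k,w_k)\}$ be an infinite sequence generated by the IPHA (the stopping condition never holds). Then $\{(x_k,w_k)\}$ converges to a pair $(x^*,w^* )$ which solves the SVI in extensive form, and $x^*$ is a solution of the basic SVI.
   Context: Multistage setting: $\Xi$ is a finite set of scenarios $\xi=(\xi_1,\dots,\xi_N)$ with probabilities $p(\xi)>0$; $n=n_1+\dots+n_N$. $\mathcal L_n$ is the space of functions $x:\Xi\to\mathbb R^n$, $x(\xi)=(x_1(\xi),\dots,x_N(\xi))$, $x_j(\xi)\in\mathbb R^{n_j}$, with inner product $\langle x,w\rangle=\sum_{\xi}p(\xi)\sum_{j}\langle x_j(\xi),w_j(\xi)\rangle$. $\mathcal N=\{x\in\mathcal L_n: x_j(\xi)\text{ does not depend on }\xi_j,\dots,\xi_N\}$, $\mathcal M=\mathcal N^\perp$, with orthogonal projections $P_{\mathcal N},P_{\mathcal M}$. For each $\xi$, $C(\xi)\subset\mathbb R^n$ is nonempty closed convex and $F(\cdot,\xi):\mathbb R^n\to\mathbb R^n$ is continuous monotone; $\mathcal C=\{x\in\mathcal L_n: x(\xi)\in C(\xi)\ \forall\xi\}$ and $\mathcal F(x)(\xi)=F(x(\xi),\xi)$. $r>0$ fixed. Basic SVI: find $x\in\mathcal C\cap\mathcal N$ with $-\mathcal F(x)\in N_{\mathcal C\cap\mathcal N}(x)$. SVI in extensive form: find $x\in\mathcal N$, $w\in\mathcal M$ with $-F(x(\xi),\xi)-w(\xi)\in N_{C(\xi)}(x(\xi))$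 for all $\xi\in\Xi$. IPHA: choose $x_0\in\mathcal N$, $w_0\in\mathcal M$, $\bar\sigma\in(0,1)$, $\theta\in(0,1)$. At iteration $k$: choose $\sigma_k\in[0,\bar\sigma)$, find $\hat x^k,\hat w^k\in\mathcal L_n$ with $r(x_k(\xi)-\hat x^k(\xi))-w_k(\xi)\in F(\hat w^k(\xi),\xi)+N_{C(\xi)}(\hat w^k(\xi))$ for all $\xi$, $\delta^k=\hat w^k-\hat x^k$, and $\|\delta^k\|^2\le\sigma_k^2(\|a_k\|^2+\|b_k\|^2)$, where $a_k=x_k-P_{\mathcal N}(\hat x^k)+P_{\mathcal M}(\hat w^k)$, $b_k=x_k-P_{\mathcal N}(\hat w^k)+P_{\mathcal M}(\hat x^k)$. If $b_k=0$ stop; otherwise choose $\tau_k\in[1-\theta,1+\theta]$, set $\alpha_k=\langle a_k,b_k\rangle/\|a_k\|^2$, $x_{k+1}=x_k-\tau_k\alpha_k(x_k-P_{\mathcal N}(\hat x^k))$, $w_{k+1}=w_k+\tau_k\alpha_k rP_{\mathcal M}(\hat w^k)$. *)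

(* Defs.v *)
From HB Require Import structures.
From mathcomp Require Import all_boot all_order all_algebra.
From mathcomp Require Import all_classical all_reals all_analysis.
Set Implicit Arguments. Unset Strict Implicit. Unset Printing Implicit Defensive.
Import Order.TTheory GRing.Theory Num.Theory.
Import numFieldNormedType.Exports.
Local Open Scope ring_scope.
Local Open Scope classical_set_scope.

Section Pointwise.
Context {R : realType} {n : nat}.

Definition dotv (u v : 'rV[R]_n) : R := \sum_(i < n) u ord0 i * v ord0 i.

Definition cvx_set (C : set 'rV[R]_n) : Prop :=
  forall u v (t : R), C u -> C v -> 0 <= t <= 1 -> C (t *: u + (1 - t) *: v).

(* normal cone N_C(u); empty when u \notin C *)
Definition ncone (C : set 'rV[R]_n) (u : 'rV[R]_n) : set 'rV[R]_n :=
  [set v | C u /\ forall y, C y -> dotv v (y - u) <= 0].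

Definition monotone_map (F : 'rV[R]_n -> 'rV[R]_n) : Prop :=
  forall u v, 0 <= dotv (F u - F v) (u - v).

End Pointwise.

Section Scenario.
Context {R : realType} {n : nat} {Xi : finType}.

Definition Ln := {ffun Xi -> 'rV[R]_n}.

Definition ipL (p : Xi -> R) (x w : Ln) : R := \sum_(xi : Xi) p xi * dotv (x xi) (w xi).
Definition sqnormL (p : Xi -> R) (x : Ln) : R := ipL p x x.

(* nonanticipative subspace: coordinate i belongs to stage [stage i] (0-indexed);
   its value may only depend on the scenario components of stages < stage i *)
Definition nonant (N : nat) (E : 'I_N -> Type) (comp : Xi -> forall j : 'I_N, E j)
  (stage : 'I_n -> 'I_N) : set Ln :=
  [set x : Ln | forall (xi xi' : Xi) (i : 'I_n),
      (forall j : 'I_N, (j < stage i)%N -> comp xi j = comp xi' j) ->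
      x xi ord0 i = x xi' ord0 i].

Definition orthL (p : Xi -> R) (S : set Ln) : set Ln :=
  [set w | forall x, S x -> ipL p x w = 0].

Definition is_orth_proj (p : Xi -> R) (S : set Ln) (P : Ln -> Ln) : Prop :=
  forall x, S (P x) /\ forall z, S z -> ipL p (x - P x) z = 0.

(* normal cone in L_n; empty outside K *)
Definition nconeL (p : Xi -> R) (K : set Ln) (x : Ln) : set Ln :=
  [set v | K x /\ forall y, K y -> ipL p v (y - x) <= 0].

Definition liftC (C : Xi -> set 'rV[R]_n) : set Ln := [set x | forall xi, C xi (x xi)].
Definition liftF (F : Xi -> 'rV[R]_n -> 'rV[R]_n) (x : Ln) : Ln := [ffun xi => F xi (x xi)].

Definition basic_SVI p (NN : set Ln) C F (x : Ln) : Prop :=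
  nconeL p (liftC C `&` NN) x (- liftF F x).

Definition ext_SVI (NN MM : set Ln) (C : Xi -> set 'rV[R]_n)
  (F : Xi -> 'rV[R]_n -> 'rV[R]_n) (x w : Ln) : Prop :=
  NN x /\ MM w /\ forall xi, ncone (C xi) (x xi) (- F xi (x xi) - w xi).

Definition ak (PN PM : Ln -> Ln) (xk xh wh : Ln) : Ln := xk - PN xh + PM wh.
Definition bk (PN PM : Ln -> Ln) (xk xh wh : Ln) : Ln := xk - PN wh + PM xh.

Definition IPHA_run (p : Xi -> R) (NN MM : set Ln) (PN PM : Ln -> Ln)
  (C : Xi -> set 'rV[R]_n) (F : Xi -> 'rV[R]_n -> 'rV[R]_n) (r sigbar theta : R)
  (x w xh wh : nat -> Ln) (sig tau : nat -> R) : Prop :=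
  [/\ NN (x 0%N), MM (w 0%N), 0 < sigbar < 1, 0 < theta < 1 &
  forall k : nat,
    let a := ak PN PM (x k) (xh k) (wh k) in
    let b := bk PN PM (x k) (xh k) (wh k) in
    let alpha := ipL p a b / sqnormL p a in
    [/\ 0 <= sig k < sigbar,
        forall xi, exists v, ncone (C xi) (wh k xi) v /\
          r *: (x k xi - xh k xi) - w k xi = F xi (wh k xi) + v,
        sqnormL p (wh k - xh k) <= sig k ^+ 2 * (sqnormL p a + sqnormL p b),
        b <> 0 (* stopping test never met *) &
      [/\ 1 - theta <= tau k <= 1 + theta,
        x k.+1 = x k - (tau k * alpha) *: (x k - PN (xh k)) &
        w k.+1 = w k + (tau k * alpha * r) *: PM (wh k)]]].

End Scenario.

(* Main.v *)
Require Import Defs.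
From HB Require Import structures.
From mathcomp Require Import all_boot all_order all_algebra.
From mathcomp Require Import all_classical all_reals all_analysis.
From mathcomp Require Import ring lra.
Import Order.TTheory GRing.Theory Num.Theory.
Import numFieldNormedType.Exports.
Local Open Scope ring_scope.
Local Open Scope classical_set_scope.

Section Dot.
Context {R : realType} {n : nat}.
Implicit Types u v z : 'rV[R]_n.

Lemma dotvC u v : dotv u v = dotv v u.
Proof. by apply: eq_bigr => i _; rewrite mulrC. Qed.
Lemma dotvDl u v z : dotv (u + v) z = dotv u z + dotv v z.
Proof. by rewrite /dotv -big_split; apply: eq_bigr => i _; rewrite !mxE mulrDl. Qed.
Lemma dotvZl (a : R) u v : dotv (a *: u) v = a * dotv u v.
Proof. by rewrite /dotv mulr_sumr; apply: eq_bigr => i _; rewrite !mxE mulrA. Qed.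
Lemma dotvNl u v : dotv (- u) v = - dotv u v.
Proof. by rewrite -scaleN1r dotvZl mulN1r. Qed.
Lemma dotvBl u v z : dotv (u - v) z = dotv u z - dotv v z.
Proof. by rewrite dotvDl dotvNl. Qed.
Lemma dotvDr u v z : dotv z (u + v) = dotv z u + dotv z v.
Proof. by rewrite dotvC dotvDl !(dotvC z). Qed.
Lemma dotvNr u v : dotv u (- v) = - dotv u v.
Proof. by rewrite dotvC dotvNl dotvC. Qed.
Lemma dotvBr u v z : dotv z (u - v) = dotv z u - dotv z v.
Proof. by rewrite dotvDr dotvNr. Qed.
Lemma dotvZr (a : R) u v : dotv u (a *: v) = a * dotv u v.
Proof. by rewrite dotvC dotvZl dotvC. Qed.
Lemma dotv_ge0 u : 0 <= dotv u u.
Proof. by apply: sumr_ge0 => i _; rewrite -expr2 sqr_ge0. Qed.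
Lemma coord_le_dotv u i : u ord0 i ^+ 2 <= dotv u u.
Proof.
rewrite /dotv (bigD1 i) //= -expr2 lerDl.
by apply: sumr_ge0 => j _; rewrite -expr2 sqr_ge0.
Qed.
Lemma dotv_eq0 u : dotv u u = 0 -> u = 0.
Proof.
move=> h; apply/rowP => i; rewrite mxE.
have := coord_le_dotv u i; rewrite h => hi.
have : u ord0 i ^+ 2 = 0 by apply/eqP; rewrite eq_le hi sqr_ge0.
by move/eqP; rewrite sqrf_eq0 => /eqP.
Qed.
Lemma norm_sq_le_dotv u : `|u| ^+ 2 <= dotv u u.
Proof.
have -> : `|u| = mx_norm u by [].
have [->|/mx_norm_neq0 [[i j] ->]] := eqVneq (mx_norm u) 0.
  by rewrite expr0n /= dotv_ge0.
by rewrite /= (ord1 i) real_normK ?num_real // coord_le_dotv.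
Qed.
End Dot.

Section IP.
Context {R : realType} {n : nat} {Xi : finType} (p : Xi -> R).
Local Notation L := (@Ln R n Xi).
Local Notation ip := (ipL p).
Local Notation nm := (sqnormL p).
Implicit Types x y z : L.

Lemma ipC x y : ip x y = ip y x.
Proof. by apply: eq_bigr => i _; rewrite dotvC. Qed.
Lemma ipDl x y z : ip (x + y) z = ip x z + ip y z.
Proof. by rewrite /ipL -big_split; apply: eq_bigr => i _; rewrite !ffunE dotvDl mulrDr. Qed.
Lemma ipZl (a : R) x y : ip (a *: x) y = a * ip x y.
Proof. by rewrite /ipL mulr_sumr; apply: eq_bigr => i _; rewrite !ffunE dotvZl mulrCA. Qed.
Lemma ipNl x y : ip (- x) y = - ip x y.
Proof. by rewrite -scaleN1r ipZl mulN1r. Qed.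
Lemma ipBl x y z : ip (x - y) z = ip x z - ip y z.
Proof. by rewrite ipDl ipNl. Qed.
Lemma ipDr x y z : ip z (x + y) = ip z x + ip z y.
Proof. by rewrite ipC ipDl !(ipC z). Qed.
Lemma ipZr (a : R) x y : ip x (a *: y) = a * ip x y.
Proof. by rewrite ipC ipZl ipC. Qed.
Lemma ipNr x y : ip x (- y) = - ip x y.
Proof. by rewrite ipC ipNl ipC. Qed.
Lemma ipBr x y z : ip z (x - y) = ip z x - ip z y.
Proof. by rewrite ipDr ipNr. Qed.
Lemma ip0l x : ip 0 x = 0.
Proof. by rewrite -(scale0r 0) ipZl mul0r. Qed.

Lemma nmD x y : nm (x + y) = nm x + 2 * ip x y + nm y.
Proof. rewrite /sqnormL ipDl !ipDr (ipC y x); ring. Qed.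
Lemma nmB x y : nm (x - y) = nm x - 2 * ip x y + nm y.
Proof. rewrite nmD /sqnormL !ipNr !ipNl opprK; ring. Qed.
Lemma nmDZ x y (s : R) : nm (x + s *: y) = nm x + 2 * s * ip x y + s ^+ 2 * nm y.
Proof. rewrite nmD /sqnormL ipZr ipZl ipZr; ring. Qed.

Context (Hp : forall xi, 0 < p xi).

Lemma nm_ge0 x : 0 <= nm x.
Proof. by apply: sumr_ge0 => i _; rewrite mulr_ge0 ?dotv_ge0 ?(ltW (Hp _)). Qed.
Lemma nm_entry x xi : p xi * dotv (x xi) (x xi) <= nm x.
Proof.
rewrite /sqnormL /ipL (bigD1 xi) //= lerDl.
by apply: sumr_ge0 => i _; rewrite mulr_ge0 ?dotv_ge0 ?(ltW (Hp _)).
Qed.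
Lemma nm_eq0 x : nm x = 0 -> x = 0.
Proof.
move=> h; apply/ffunP => xi; rewrite ffunE; apply: dotv_eq0.
have := nm_entry x xi; rewrite h => h1.
have h2 : 0 <= p xi * dotv (x xi) (x xi) by rewrite mulr_ge0 ?dotv_ge0 ?(ltW (Hp _)).
have : p xi * dotv (x xi) (x xi) = 0 by apply/eqP; rewrite eq_le h1 h2.
by move/eqP; rewrite mulf_eq0 gt_eqF //= => /eqP.
Qed.
Lemma dotv_le_nm x xi : dotv (x xi) (x xi) <= nm x / p xi.
Proof. by rewrite ler_pdivlMr // mulrC nm_entry. Qed.
End IP.

Section Proj.
Context {R : realType} {n : nat} {Xi : finType} (p : Xi -> R).
Context (Hp : forall xi, 0 < p xi).
Local Notation L := (@Ln R n Xi).
Local Notation ip := (ipL p).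
Local Notation nm := (sqnormL p).
Implicit Types x y z : L.

Definition subsp (S : set L) := S 0 /\ forall (a : R) x y, S x -> S y -> S (a *: x + y).

Lemma subspD S x y : subsp S -> S x -> S y -> S (x + y).
Proof. by move=> [_ h] hx hy; rewrite -(scale1r x); apply: h. Qed.
Lemma subspZ S (a : R) x : subsp S -> S x -> S (a *: x).
Proof. by move=> [h0 h] hx; rewrite -(addr0 (a *: x)); apply: h. Qed.
Lemma subspN S x : subsp S -> S x -> S (- x).
Proof. by move=> hS hx; rewrite -scaleN1r; apply: subspZ. Qed.
Lemma subspB S x y : subsp S -> S x -> S y -> S (x - y).
Proof. by move=> hS hx hy; apply: subspD => //; apply: subspN. Qed.

Lemma orthL_subsp S : subsp (orthL p S).
Proof.
split; first by move=> x _; rewrite ipC ip0l.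
by move=> a x y hx hy z hz; rewrite ipDr ipZr hx // hy // mulr0 addr0.
Qed.

Lemma proj_id S P y : subsp S -> is_orth_proj p S P -> S y -> P y = y.
Proof.
move=> hS hP hy; have [h1 h2] := hP y.
have hz : S (y - P y) by apply: subspB.
have := h2 _ hz => /(nm_eq0 p Hp) /eqP; rewrite subr_eq0 => /eqP e; by rewrite -e.
Qed.

Lemma proj_sum S PN PM y : subsp S -> is_orth_proj p S PN ->
  is_orth_proj p (orthL p S) PM -> PN y + PM y = y.
Proof.
move=> hS hN hM.
have [hN1 hN2] := hN y; have [hM1 hM2] := hM y.
have hm : orthL p S (y - PN y) by move=> z hz; rewrite ipC hN2.
set d := PM y - (y - PN y).
have hd : orthL p S d by apply: (subspB _ _ _ (orthL_subsp S)).
have e : y - PM y = PN y - d by rewrite /d; apply/ffunP => xi; apply/rowP => i; rewrite !ffunE !mxE; ring.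
have := hM2 d hd; rewrite e ipBl (hd _ hN1) sub0r => /eqP; rewrite oppr_eq0 => /eqP.
move/(nm_eq0 p Hp)/eqP; rewrite /d subr_eq0 => /eqP ->.
by rewrite addrC subrK.
Qed.

Lemma nonant_subsp (N : nat) (E : 'I_N -> Type) (comp : Xi -> forall j : 'I_N, E j)
  (stage : 'I_n -> 'I_N) : subsp (@nonant R n Xi N E comp stage).
Proof.
split; first by move=> xi xi' i _; rewrite !ffunE !mxE.
move=> a x y hx hy xi xi' i h.
by rewrite !ffunE !mxE (hx xi xi' i h) (hy xi xi' i h).
Qed.
End Proj.

Section Gen.
Context {R : realType}.

Lemma cvg_sumr (I : Type) (r : seq I) (f : I -> nat -> R) (l : I -> R) :
  (forall i, f i @ \oo --> l i) ->
  (fun k => \sum_(i <- r) f i k) @ \oo --> \sum_(i <- r) l i.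
Proof.
move=> h; elim: r => [|i r ih].
  have -> : (fun k => \sum_(i <- [::]) f i k) = (fun=> 0) by apply/funext => k; rewrite big_nil.
  by rewrite big_nil; exact: cvg_cst.
have -> : (fun k => \sum_(j <- i :: r) f j k) = (fun k => f i k + \sum_(j <- r) f j k).
  by apply/funext => k; rewrite big_cons.
by rewrite big_cons; apply: cvgD.
Qed.

Lemma cvg_sumr_fin (I : finType) (f : I -> nat -> R) (l : I -> R) :
  (forall i, f i @ \oo --> l i) ->
  (fun k => \sum_(i : I) f i k) @ \oo --> \sum_(i : I) l i.
Proof. move=> h; have := (@cvg_sumr I (index_enum I) _ _ h). move=> H. exact: H. Qed.

Lemma subseq_cvg {T : topologicalType} (u : nat -> T) (f : nat -> nat) (l : T) :
  increasing_seq f -> u @ \oo --> l -> (u \o f) @ \oo --> l.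
Proof.
move=> hf hu.
have hn : forall k, (k <= f k)%N.
  elim=> [//|k ih]; have /increasing_seqP h := hf.
  by apply: leq_ltn_trans ih _; exact: h.
apply: cvg_comp hu => A [N _ hN]; exists N => // m /= hm; apply: hN => /=.
exact: leq_trans hm (hn m).
Qed.

Lemma incr_comp (f g : nat -> nat) : increasing_seq f -> increasing_seq g ->
  increasing_seq (f \o g).
Proof. by move=> hf hg a b /=; rewrite hf; exact: hg. Qed.

Lemma bounded_of (u : nat -> R) (M : R) : (forall k, `|u k| <= M) -> bounded_fun u.
Proof.
move=> h; exists M; split; first by rewrite num_real.
by move=> y hy z _; apply: le_trans (h z) (ltW hy).
Qed.

Lemma extract (T : eqType) (s : seq T) (u : T -> nat -> R) :
  (forall t, exists M : R, forall k, `|u t k| <= M) ->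
  exists2 f : nat -> nat, increasing_seq f & forall t, t \in s -> cvgn (u t \o f).
Proof.
move=> hb; elim: s => [|t s [f hf ih]].
  by exists id => // a b.
have [M hM] := hb t.
have [g hg hcv] := @bolzano_weierstrass R (u t \o f) (@bounded_of (u t \o f) M (fun k => hM (f k))).
exists (f \o g); first exact: incr_comp.
move=> t'; rewrite inE => /orP[/eqP ->|ht']; first by [].
have /cvg_ex [l hl] := ih t' ht'; apply/cvg_ex; exists l.
exact: (subseq_cvg _ _ _ hg hl).
Qed.

Context {n : nat}.
Implicit Types (u : nat -> 'rV[R]_n) (v : 'rV[R]_n).

Lemma rv_cvg0 u : (fun k => dotv (u k) (u k)) @ \oo --> (0:R) -> u @ \oo --> (0 : 'rV[R]_n).
Proof.
move=> h; apply/cvgr0Pnorm_lt => e e0.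
have e2 : 0 < e ^+ 2 by apply: exprn_gt0.
near=> k.
have hk : `|dotv (u k) (u k)| < e ^+ 2 by near: k; exact: (cvgr0_norm_lt _ h).
have h1 := norm_sq_le_dotv (u k).
have h2 : 0 <= `|u k| by [].
have h3 := dotv_ge0 (u k).
rewrite ger0_norm // in hk.
nra.
Unshelve. all: by end_near. Qed.

Lemma rv_cvg_sub u v : (fun k => u k - v) @ \oo --> (0 : 'rV[R]_n) -> u @ \oo --> v.
Proof.
move=> h; apply: (@cvg_sub0 _ _ _ _ _ u (fun=> v)) => //; exact: cvg_cst.
Qed.

Lemma rv_coord u v i : u @ \oo --> v -> (fun k => u k ord0 i) @ \oo --> v ord0 i.
Proof.
move=> h.
exact: (@continuous_cvg _ _ _ _ _ u (fun M : 'rV[R]_n => M ord0 i) v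
  (@coord_continuous _ 1 n ord0 i v) h).
Qed.

Lemma rv_entry_cvg u v : (forall i, (fun k => u k ord0 i) @ \oo --> v ord0 i) ->
  u @ \oo --> v.
Proof.
move=> h; apply: rv_cvg_sub; apply: rv_cvg0.
have -> : (0 : R) = \sum_(i < n) (0 * 0) by rewrite big1 // => i _; rewrite mulr0.
apply: cvg_sumr_fin => i /=.
have : (fun k => (u k - v) ord0 i) @ \oo --> 0.
  have -> : (fun k => (u k - v) ord0 i) = (fun k => u k ord0 i - v ord0 i).
    by apply/funext => k; rewrite !mxE.
  rewrite -(subrr (v ord0 i)); apply: cvgB => //; exact: cvg_cst.
by move=> hc; apply: cvgM.
Qed.

Lemma dotv_cvg u u' v v' : u @ \oo --> v -> u' @ \oo --> v' ->
  (fun k => dotv (u k) (u' k)) @ \oo --> dotv v v'.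
Proof.
move=> h h'; apply: cvg_sumr_fin => i; apply: cvgM; exact: rv_coord.
Qed.
End Gen.

Section LnC.
Context {R : realType} {n : nat} {Xi : finType} (p : Xi -> R) (Hp : forall xi, 0 < p xi).
Local Notation L := (@Ln R n Xi).
Local Notation ip := (ipL p).
Local Notation nm := (sqnormL p).

Lemma nm_cvg_pt (z : nat -> L) (z0 : L) :
  (fun k => nm (z k - z0)) @ \oo --> (0:R) -> forall xi, (fun k => z k xi) @ \oo --> z0 xi.
Proof.
move=> h xi; apply: rv_cvg_sub; apply: rv_cvg0.
apply: (@squeeze_cvgr _ _ _ _ (fun=> 0) (fun k => nm (z k - z0) / p xi)).
- near=> k; rewrite dotv_ge0 /=.
  have := dotv_le_nm _ Hp (z k - z0) xi; by rewrite !ffunE.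
- exact: cvg_cst.
- by rewrite -(mul0r (p xi)^-1); apply: cvgMr_tmp.
Unshelve. all: by end_near. Qed.

Lemma pt_cvg_nm (z : nat -> L) (z0 : L) :
  (forall xi, (fun k => z k xi) @ \oo --> z0 xi) -> (fun k => nm (z k - z0)) @ \oo --> (0:R).
Proof.
move=> h.
have -> : (0:R) = \sum_(xi : Xi) p xi * dotv (0 : 'rV[R]_n) 0.
  by rewrite big1 // => xi _; rewrite /dotv big1 ?mulr0 // => i _; rewrite mxE mul0r.
apply: cvg_sumr_fin => xi; apply: cvgMl_tmp.
have hc : (fun k => (z k - z0) xi) @ \oo --> (0 : 'rV[R]_n).
  have -> : (fun k => (z k - z0) xi) = (fun k => z k xi - z0 xi).
    by apply/funext => k; rewrite !ffunE.
  rewrite -(subrr (z0 xi)); apply: cvgB => //; exact: cvg_cst.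
exact: dotv_cvg.
Qed.

Lemma ip_cvg_r (y : L) (z : nat -> L) (z0 : L) :
  (forall xi, (fun k => z k xi) @ \oo --> z0 xi) -> (fun k => ip y (z k)) @ \oo --> ip y z0.
Proof.
move=> h; apply: cvg_sumr_fin => xi; apply: cvgMl_tmp; apply: dotv_cvg => //.
exact: cvg_cst.
Qed.

Lemma entry_bound (z z0 : L) xi i :
  `|z xi ord0 i| <= `|z0 xi ord0 i| + 1 + nm (z - z0) / p xi.
Proof.
set c := z xi ord0 i - z0 xi ord0 i.
have hc2 : c ^+ 2 <= nm (z - z0) / p xi.
  apply: le_trans (dotv_le_nm _ Hp (z - z0) xi).
  by have := coord_le_dotv ((z - z0) xi) i; rewrite !ffunE !mxE.
have hn : `|c| ^+ 2 = c ^+ 2 by rewrite real_normK // num_real.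
have hc : `|c| <= 1 + c ^+ 2 by have := normr_ge0 c; nra.
have -> : z xi ord0 i = z0 xi ord0 i + c by rewrite /c; ring.
apply: le_trans (ler_normD _ _) _; lra.
Qed.

Lemma cvg_eq_const (u : nat -> R) (c l : R) : (forall k, u k = c) -> u @ \oo --> l -> l = c.
Proof.
move=> hu; have -> : u = fun=> c by apply/funext.
move=> hc; have hc2 : (fun=> c) @ \oo --> c by exact: cvg_cst.
exact: (@cvg_unique _ (@Rhausdorff R) _ _ l c hc hc2).
Qed.
End LnC.

Ltac veq := apply/ffunP => ?; apply/rowP => ?; rewrite ?ffunE ?mxE; ring.

Section Main.
Context {R : realType} {n : nat} {Xi : finType} (p : Xi -> R) (Hp : forall xi, 0 < p xi).
Local Notation L := (@Ln R n Xi).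
Local Notation ip := (ipL p).
Local Notation nm := (sqnormL p).
Context (NN : set L) (HN : subsp NN) (PN PM : L -> L)
  (HPN : is_orth_proj p NN PN) (HPM : is_orth_proj p (orthL p NN) PM).
Local Notation MM := (orthL p NN).
Context (C : Xi -> set 'rV[R]_n) (F : Xi -> 'rV[R]_n -> 'rV[R]_n)
  (HFm : forall xi, monotone_map (F xi)).
Context (r sigbar theta : R) (hr : 0 < r) (x w xh wh : nat -> L) (sig tau : nat -> R).
Context (run : IPHA_run p NN MM PN PM C F r sigbar theta x w xh wh sig tau).

Let HM : subsp MM := orthL_subsp p NN.

Lemma xwNM k : NN (x k) /\ MM (w k).
Proof.
elim: k => [|k [ihx ihw]]; first by case: run.
case: run => _ _ _ _ /(_ k) /= [_ _ _ _ [_ -> ->]]; split.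
  apply: (subspB _ _ _ HN ihx); apply: (subspZ _ _ _ HN).
  exact: (subspB _ _ _ HN ihx (HPN _).1).
apply: (subspD _ _ _ HM ihw); apply: (subspZ _ _ _ HM); exact: (HPM _).1.
Qed.

Lemma ip_NM {u v} : NN u -> MM v -> ip u v = 0.
Proof. by move=> hu hv; apply: hv. Qed.
Lemma ip_MN {u v} : MM u -> NN v -> ip u v = 0.
Proof. by move=> hu hv; rewrite ipC; apply: hu. Qed.

Lemma ip_split u1 u2 v1 v2 : NN u1 -> NN u2 -> MM v1 -> MM v2 ->
  ip (u1 + v1) (u2 + v2) = ip u1 u2 + ip v1 v2.
Proof.
move=> h1 h2 h3 h4; rewrite ipDl !ipDr (ip_NM h1 h4) (ip_MN h3 h2); ring.
Qed.

Lemma psum y : PN y + PM y = y.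
Proof. exact: (proj_sum _ Hp _ _ _ _ HN HPN HPM). Qed.

Let aa k := ak PN PM (x k) (xh k) (wh k).
Let bb k := bk PN PM (x k) (xh k) (wh k).
Let S k := nm (aa k) + nm (bb k).

Lemma ab_diff k : aa k - bb k = wh k - xh k.
Proof.
have -> : wh k - xh k = (PN (wh k) + PM (wh k)) - (PN (xh k) + PM (xh k)) by rewrite !psum.
rewrite /aa /bb /ak /bk; veq.
Qed.

Lemma sig_bnd k : 0 <= sig k < sigbar.
Proof. by case: run => _ _ _ _ /(_ k) /= [+ _ _ _ _]. Qed.
Lemma sigbar_bnd : 0 < sigbar < 1.
Proof. by case: run. Qed.
Lemma theta_bnd : 0 < theta < 1.
Proof. by case: run. Qed.

Lemma ab_ip k : (1 - sig k ^+ 2) * S k <= 2 * ip (aa k) (bb k).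
Proof.
have h : nm (wh k - xh k) <= sig k ^+ 2 * (nm (aa k) + nm (bb k)).
  by case: run => _ _ _ _ /(_ k) /= [_ _ + _ _].
rewrite -ab_diff nmB in h; rewrite /S; lra.
Qed.

Lemma S_ge0 k : 0 <= S k.
Proof. by rewrite /S addr_ge0 // (nm_ge0 _ Hp). Qed.

Lemma sig_lt1 k : 0 < 1 - sig k ^+ 2.
Proof.
have := sig_bnd k; have := sigbar_bnd => /andP[h1 h2] /andP[h3 h4].
rewrite subr_gt0; nra.
Qed.

Lemma na_pos k : 0 < nm (aa k).
Proof.
rewrite lt_def (nm_ge0 _ Hp) andbT; apply/eqP => /(nm_eq0 _ Hp) h0.
have := ab_ip k; rewrite h0 ip0l mulr0 => h.
have hb : bb k <> 0 by case: run => _ _ _ _ /(_ k) /= [_ _ _ + _].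
apply: hb; apply: (nm_eq0 _ Hp); apply/eqP; rewrite eq_le (nm_ge0 _ Hp) andbT.
have hs := sig_lt1 k.
have : S k <= 0 by rewrite -(pmulr_rle0 _ hs).
by rewrite /S h0 /sqnormL ip0l add0r.
Qed.

Definition Dz (x' w' : L) k := r * nm (x k - x') + r^-1 * nm (w k - w').
Definition cc := r * (1 - theta ^+ 2) * (1 - sigbar ^+ 2) ^+ 2 / 4.

Lemma cc_gt0 : 0 < cc.
Proof.
have := sigbar_bnd; have := theta_bnd => /andP[h1 h2] /andP[h3 h4].
rewrite /cc; apply: divr_gt0 => //; apply: mulr_gt0; first (apply: mulr_gt0 => //; rewrite subr_gt0; nra).
by apply: exprn_gt0; rewrite subr_gt0; nra.
Qed.

Lemma Dz_ge0 (x' w' : L) k : 0 <= Dz x' w' k.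
Proof. by rewrite /Dz addr_ge0 // mulr_ge0 ?(nm_ge0 _ Hp) ?invr_ge0 ?ltW. Qed.

Lemma mono_step (x' w' : L) k : (forall xi, ncone (C xi) (x' xi) (- F xi (x' xi) - w' xi)) ->
  0 <= ip (wh k - x') (r *: (x k - xh k) - w k + w').
Proof.
move=> hsol; apply: sumr_ge0 => xi _; apply: mulr_ge0; first exact: ltW.
have [v [[hCw hv] e]] : exists v, ncone (C xi) (wh k xi) v /\
    r *: (x k xi - xh k xi) - w k xi = F xi (wh k xi) + v.
  by case: run => _ _ _ _ /(_ k) /= [_ + _ _ _].
have [hCx hv'] := hsol xi.
rewrite !ffunE e.
set v' := - F xi (x' xi) - w' xi.
have -> : F xi (wh k xi) + v + w' xi = (F xi (wh k xi) - F xi (x' xi)) + (v - v').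
  by rewrite /v'; apply/rowP => ?; rewrite !mxE; ring.
have h1 := HFm xi (wh k xi) (x' xi).
have h2 := hv (x' xi) hCx.
have h3 := hv' (wh k xi) hCw.
rewrite dotvDr (dotvC _ (F xi (wh k xi) - F xi (x' xi))) dotvBr (dotvC _ v) (dotvC _ v').
have -> : dotv v (wh k xi - x' xi) = - dotv v (x' xi - wh k xi).
  by rewrite -dotvNr opprB.
lra.
Qed.

Lemma fejer {x' w' : L} : NN x' -> MM w' ->
  (forall xi, ncone (C xi) (x' xi) (- F xi (x' xi) - w' xi)) ->
  forall k, Dz x' w' k.+1 <= Dz x' w' k - cc * S k.
Proof.
move=> hx' hw' hsol k.
have hm := mono_step x' w' k hsol.
have [hX hW] := xwNM k.
set X := x k in hm hX *; set W := w k in hm hW *.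
set nx := PN (xh k); set mx := PM (xh k); set nw := PN (wh k); set mw := PM (wh k).
have hnx : NN nx := (HPN _).1. have hnw : NN nw := (HPN _).1.
have hmx : MM mx := (HPM _).1. have hmw : MM mw := (HPM _).1.
have exh : xh k = nx + mx by rewrite psum.
have ewh : wh k = nw + mw by rewrite psum.
set Aa := X - nx.
have hA : NN Aa by apply: (subspB _ _ _ HN).
have ea : aa k = Aa + mw by rewrite /aa /ak.
have eb : bb k = (X - nw) + mx by rewrite /bb /bk; veq.
have iab : ip (aa k) (bb k) = ip Aa (X - nw) + ip mw mx.
  by rewrite ea eb ip_split //; exact: (subspB _ _ _ HN).
have na : nm (aa k) = nm Aa + nm mw by rewrite /sqnormL ea ip_split.
have hm' : 0 <= r * ip (nw - x') Aa + ip mw w' - ip mw W - r * ip mw mx.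
  have e1 : wh k - x' = (nw - x') + mw by rewrite ewh; veq.
  have e2 : r *: (X - xh k) - W + w' = r *: Aa + ((w' - W) - r *: mx) by rewrite exh; veq.
  rewrite e1 e2 ip_split in hm; last 4 first.
  - exact: (subspB _ _ _ HN).
  - exact: (subspZ _ _ _ HN).
  - by [].
  - apply: (subspB _ _ _ HM); [exact: (subspB _ _ _ HM)| exact: (subspZ _ _ _ HM)].
  by move: hm; rewrite ipZr !ipBr ipZr; lra.
set Q := r * ip (X - x') Aa - ip (W - w') mw.
have hQ : r * ip (aa k) (bb k) <= Q.
  have e3 : X - x' = (X - nw) + (nw - x') by veq.
  rewrite /Q e3 ipDl iab (ipC _ Aa) (ipC _ (W - w')) ipBr; lra.
case: run => _ _ _ _ /(_ k) /= [_ _ _ _ [htau ex ew]].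
rewrite -/(aa k) -/(bb k) -/X -/W -/nx -/mw in ex ew.
set g := ip (aa k) (bb k) / nm (aa k) in ex ew.
set t := tau k * g in ex ew.
have ex' : x k.+1 - x' = (X - x') + (- t) *: Aa by rewrite ex; veq.
have ew' : w k.+1 - w' = (W - w') + (t * r) *: mw by rewrite ew; veq.
have hD : Dz x' w' k.+1 = Dz x' w' k - 2 * t * Q + t ^+ 2 * r * nm (aa k).
  rewrite /Dz ex' ew' !nmDZ na /Q -/X -/W; field; exact: lt0r_neq0.
have hna := na_pos k.
have hg : g * nm (aa k) = ip (aa k) (bb k) by rewrite /g divfK // lt0r_neq0.
have := theta_bnd; have := sigbar_bnd; have := sig_bnd k.
move=> /andP[hs1 hs2] /andP[hsb1 hsb2] /andP[ht1 ht2].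
move: htau => /andP[hta1 hta2].
have hab := ab_ip k.
have hS := S_ge0 k.
have hsig : 1 - sigbar ^+ 2 <= 1 - sig k ^+ 2 by rewrite lerD2l lerN2; nra.
set gam := (1 - sigbar ^+ 2) / 2.
have hgam : 0 <= gam by rewrite /gam divr_ge0 // subr_ge0; nra.
have hiab : gam * S k <= ip (aa k) (bb k).
  rewrite /gam; have : (1 - sigbar ^+ 2) * S k <= (1 - sig k ^+ 2) * S k by rewrite ler_wpM2r.
  lra.
have hSa : nm (aa k) <= S k by rewrite /S lerDl (nm_ge0 _ Hp).
have hgg : gam <= g.
  rewrite /g ler_pdivlMr //; apply: le_trans hiab; rewrite ler_wpM2l //.
have hg0 : 0 <= g by apply: le_trans hgg.
have ht0 : 0 <= t by rewrite /t mulr_ge0 //; lra.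
have hQ' : 0 <= t * (Q - r * ip (aa k) (bb k)) by rewrite mulr_ge0 // subr_ge0.
have hu : 1 - theta ^+ 2 <= tau k * (2 - tau k) by nra.
have h1 : (1 - theta ^+ 2) * gam <= tau k * (2 - tau k) * g.
  by apply: ler_pM => //; rewrite subr_ge0; nra.
have h2 : (1 - theta ^+ 2) * gam * (gam * S k) <= tau k * (2 - tau k) * g * ip (aa k) (bb k).
  apply: ler_pM => //; last by rewrite mulr_ge0.
  by rewrite mulr_ge0 // subr_ge0; nra.
have h3 : cc * S k = r * ((1 - theta ^+ 2) * gam * (gam * S k)) by rewrite /cc /gam; field.
have h4 : 2 * t * r * ip (aa k) (bb k) - t ^+ 2 * r * nm (aa k)
    = r * (tau k * (2 - tau k) * g * ip (aa k) (bb k)).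
  rewrite /t; rewrite -hg; ring.
have h5 := ler_wpM2l (ltW hr) h2.
rewrite hD h3; lra.
Qed.

Definition sol (x' w' : L) := NN x' /\ MM w' /\
  forall xi, ncone (C xi) (x' xi) (- F xi (x' xi) - w' xi).

Lemma Dz_noninc {x' w' : L} : sol x' w' -> forall k, Dz x' w' k.+1 <= Dz x' w' k.
Proof.
move=> [h1 [h2 h3]] k; apply: le_trans (fejer h1 h2 h3 k) _.
by rewrite lerBlDr lerDl mulr_ge0 ?S_ge0 // ltW // cc_gt0.
Qed.

Lemma Dz_le0 {x' w' : L} : sol x' w' -> forall k, Dz x' w' k <= Dz x' w' 0.
Proof.
move=> hs; elim=> [//|k ih]; exact: le_trans (Dz_noninc hs k) ih.
Qed.

Lemma Dz_cvg {x' w' : L} : sol x' w' -> exists l : R, Dz x' w' @ \oo --> l.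
Proof.
move=> hs; eexists; apply: nonincreasing_cvgn.
  by apply/nonincreasing_seqP => k; exact: Dz_noninc.
by exists 0 => _ [k _ <-]; exact: Dz_ge0.
Qed.

Lemma S_cvg0 {x' w' : L} : sol x' w' -> S @ \oo --> (0:R).
Proof.
move=> hs; have [l hl] := Dz_cvg hs.
have hl1 : (fun k => Dz x' w' k.+1) @ \oo --> l.
  by have := cvg_shiftS (Dz x' w') (nbhs l); move=> /= ->.
apply: (@squeeze_cvgr _ _ _ _ (fun=> 0) (fun k => (Dz x' w' k - Dz x' w' k.+1) / cc)).
- near=> k; rewrite S_ge0 /= ler_pdivlMr ?cc_gt0 //.
  have [h1 [h2 h3]] := hs; have := fejer h1 h2 h3 k; rewrite mulrC; lra.
- exact: cvg_cst.
- rewrite -(mul0r cc^-1) -(subrr l); apply: cvgMr_tmp; exact: cvgB.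
Unshelve. all: by end_near. Qed.

Lemma nm_xh_le k : nm (xh k - x k) <= S k /\ nm (wh k - x k) <= S k.
Proof.
have [hX hW] := xwNM k.
set X := x k in hX *.
set nx := PN (xh k); set mx := PM (xh k); set nw := PN (wh k); set mw := PM (wh k).
have hnx : NN nx := (HPN _).1. have hnw : NN nw := (HPN _).1.
have hmx : MM mx := (HPM _).1. have hmw : MM mw := (HPM _).1.
have exh : xh k = nx + mx by rewrite psum.
have ewh : wh k = nw + mw by rewrite psum.
have ea : aa k = (X - nx) + mw by rewrite /aa /ak.
have eb : bb k = (X - nw) + mx by rewrite /bb /bk; veq.
have na : nm (aa k) = nm (X - nx) + nm mw.
  by rewrite /sqnormL ea ip_split //; exact: (subspB _ _ _ HN).
have nb : nm (bb k) = nm (X - nw) + nm mx.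
  by rewrite /sqnormL eb ip_split //; exact: (subspB _ _ _ HN).
have e1 : xh k - X = (nx - X) + mx by rewrite exh; veq.
have e2 : wh k - X = (nw - X) + mw by rewrite ewh; veq.
have hnxX : NN (nx - X) by exact: (subspB _ _ _ HN).
have hnwX : NN (nw - X) by exact: (subspB _ _ _ HN).
have n1 : nm (xh k - X) = nm (X - nx) + nm mx.
  by rewrite /sqnormL e1 ip_split // -opprB ipNl ipNr opprK.
have n2 : nm (wh k - X) = nm (X - nw) + nm mw.
  by rewrite /sqnormL e2 ip_split // -opprB ipNl ipNr opprK.
have := nm_ge0 _ Hp mx; have := nm_ge0 _ Hp mw;
have := nm_ge0 _ Hp (X - nx); have := nm_ge0 _ Hp (X - nw).
rewrite /S n1 n2 na nb; split; lra.
Qed.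

Lemma NN_char z : (forall m, MM m -> ip z m = 0) -> NN z.
Proof.
move=> hz; set d := z - PN z.
have hd : MM d by move=> y hy; rewrite ipC; exact: (HPN z).2.
have h0 : nm d = 0.
  by rewrite /sqnormL {1}/d ipBl hz // (ip_NM (HPN z).1 hd) subr0.
have := nm_eq0 _ Hp _ h0; rewrite /d => /eqP; rewrite subr_eq0 => /eqP ->.
exact: (HPN z).1.
Qed.

Context (HCc : forall xi, closed (C xi)) (HFc : forall xi, continuous (F xi)).

Lemma diff_cvg0 {x' w' : L} : sol x' w' ->
  (forall xi, (fun k => xh k xi - x k xi) @ \oo --> (0:'rV[R]_n)) /\
  (forall xi, (fun k => wh k xi - x k xi) @ \oo --> (0:'rV[R]_n)).
Proof.
move=> hs; have hS := S_cvg0 hs.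
have h1 : (fun k => nm ((xh k - x k) - 0)) @ \oo --> (0:R).
  apply: (@squeeze_cvgr _ _ _ _ (fun=> 0) S) => //; last exact: cvg_cst.
  by near=> k; rewrite subr0 (nm_ge0 _ Hp) (nm_xh_le k).1.
have h2 : (fun k => nm ((wh k - x k) - 0)) @ \oo --> (0:R).
  apply: (@squeeze_cvgr _ _ _ _ (fun=> 0) S) => //; last exact: cvg_cst.
  by near=> k; rewrite subr0 (nm_ge0 _ Hp) (nm_xh_le k).2.
split => xi.
  have := nm_cvg_pt _ Hp _ _ h1 xi; rewrite ffunE.
  by have -> : (fun k => (xh k - x k) xi) = (fun k => xh k xi - x k xi)
    by apply/funext => k; rewrite !ffunE.
have := nm_cvg_pt _ Hp _ _ h2 xi; rewrite ffunE.
by have -> : (fun k => (wh k - x k) xi) = (fun k => wh k xi - x k xi)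
  by apply/funext => k; rewrite !ffunE.
Unshelve. all: by end_near. Qed.

Lemma cluster {x0 w0 : L} : sol x0 w0 -> exists x1 w1 : L, sol x1 w1 /\
  exists2 f : nat -> nat, increasing_seq f &
   (forall xi, (fun k => x (f k) xi) @ \oo --> x1 xi) /\
   (forall xi, (fun k => w (f k) xi) @ \oo --> w1 xi).
Proof.
move=> hs.
set D0 := Dz x0 w0 0.
have hD k : r * nm (x k - x0) + r^-1 * nm (w k - w0) <= D0 by exact: (Dz_le0 hs k).
have bx k : nm (x k - x0) <= D0 / r.
  rewrite ler_pdivlMr // mulrC; apply: le_trans (hD k).
  by rewrite lerDl mulr_ge0 ?(nm_ge0 _ Hp) // invr_ge0 ltW.
have bw k : nm (w k - w0) <= D0 * r.
  have h := hD k.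
  have h1 : r^-1 * nm (w k - w0) <= D0.
    by apply: le_trans h; rewrite lerDr mulr_ge0 ?(nm_ge0 _ Hp) // ltW.
  by rewrite -ler_pdivrMr // mulrC.
pose T := (Xi * 'I_n * bool)%type.
pose u (t : T) k := if t.2 then x k t.1.1 ord0 t.1.2 else w k t.1.1 ord0 t.1.2.
have hb : forall t, exists M : R, forall k, `|u t k| <= M.
  move=> [[xi i] []].
    exists (`|x0 xi ord0 i| + 1 + D0 / r / p xi) => k /=.
    apply: le_trans (entry_bound _ Hp (x k) x0 xi i) _.
    by rewrite lerD2l ler_pM2r ?invr_gt0.
  exists (`|w0 xi ord0 i| + 1 + D0 * r / p xi) => k /=.
  apply: le_trans (entry_bound _ Hp (w k) w0 xi i) _.
  by rewrite lerD2l ler_pM2r ?invr_gt0.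
have [f hf hcv] := extract _ (enum [set: Xi * 'I_n * bool]) u hb.
have hcv' : forall t, cvgn (u t \o f) by move=> t; apply: hcv; rewrite mem_enum in_setT.
pose x1 : L := [ffun xi => \row_i limn (u (xi, i, true) \o f)].
pose w1 : L := [ffun xi => \row_i limn (u (xi, i, false) \o f)].
have hx1 : forall xi, (fun k => x (f k) xi) @ \oo --> x1 xi.
  move=> xi; apply: rv_entry_cvg => i; rewrite /x1 ffunE mxE.
  exact: (hcv' (xi, i, true)).
have hw1 : forall xi, (fun k => w (f k) xi) @ \oo --> w1 xi.
  move=> xi; apply: rv_entry_cvg => i; rewrite /w1 ffunE mxE.
  exact: (hcv' (xi, i, false)).
exists x1, w1; split; last by exists f.
have [hd1 hd2] := diff_cvg0 hs.
split; [|split].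
- apply: NN_char => m hm; rewrite ipC.
  apply: (cvg_eq_const _ _ _ _ (ip_cvg_r p m (fun k => x (f k)) x1 hx1)) => k.
  exact: (ip_MN hm (xwNM _).1).
- move=> y hy.
  apply: (cvg_eq_const _ _ _ _ (ip_cvg_r p y (fun k => w (f k)) w1 hw1)) => k.
  exact: (ip_NM hy (xwNM _).2).
move=> xi.
have hwh : (fun k => wh (f k) xi) @ \oo --> x1 xi.
  have -> : x1 xi = x1 xi + 0 by rewrite addr0.
  have -> : (fun k => wh (f k) xi) = (fun k => x (f k) xi + (wh (f k) xi - x (f k) xi)).
    by apply/funext => k; rewrite addrC subrK.
  apply: cvgD => //; exact: (subseq_cvg _ _ _ hf (hd2 xi)).
have hxxh : (fun k => x (f k) xi - xh (f k) xi) @ \oo --> (0: 'rV[R]_n).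
  have -> : (fun k => x (f k) xi - xh (f k) xi) = (fun k => - (xh (f k) xi - x (f k) xi)).
    by apply/funext => k; rewrite opprB.
  rewrite -oppr0; apply: cvgN; exact: (subseq_cvg _ _ _ hf (hd1 xi)).
pose V k := r *: (x k xi - xh k xi) - w k xi - F xi (wh k xi).
have hV : forall k, ncone (C xi) (wh k xi) (V k).
  move=> k; case: run => _ _ _ _ /(_ k) /= [_ /(_ xi) [v [hv e]] _ _ _].
  by rewrite /V e [F xi _ + v]addrC addrK.
have hVc : (fun k => V (f k)) @ \oo --> - F xi (x1 xi) - w1 xi.
  have -> : - F xi (x1 xi) - w1 xi = r *: 0 - w1 xi - F xi (x1 xi).
    by rewrite scaler0 sub0r addrC.
  apply: cvgB; first by apply: cvgB => //; exact: cvgZl_tmp.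
  exact: (@continuous_cvg _ _ _ _ _ (fun k => wh (f k) xi) (F xi) (x1 xi) (HFc xi (x1 xi)) hwh).
split.
  apply: (closed_cvg (C xi) (HCc xi) _ _ hwh).
  by near=> k; exact: (hV (f k)).1.
move=> y hy.
have hc : (fun k => dotv (V (f k)) (y - wh (f k) xi)) @ \oo -->
    dotv (- F xi (x1 xi) - w1 xi) (y - x1 xi).
  by apply: dotv_cvg => //; apply: cvgB => //; exact: cvg_cst.
apply: (closed_cvg [set t : R | t <= 0] (@closed_le R 0) _ _ hc).
by near=> k; exact: ((hV (f k)).2 y hy).
Unshelve. all: by end_near. Qed.

Lemma ipha_conv {x0 w0 : L} : sol x0 w0 -> exists x1 w1 : L, sol x1 w1 /\
   (forall xi, (fun k => x k xi) @ \oo --> x1 xi) /\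
   (forall xi, (fun k => w k xi) @ \oo --> w1 xi).
Proof.
move=> hs; have [x1 [w1 [hs1 [f hf [hx hw]]]]] := cluster hs.
have [l hl] := Dz_cvg hs1.
have hxn := pt_cvg_nm p (fun k => x (f k)) x1 hx.
have hwn := pt_cvg_nm p (fun k => w (f k)) w1 hw.
have h0 : (Dz x1 w1 \o f) @ \oo --> (0:R).
  have -> : (0:R) = r * 0 + r^-1 * 0 by rewrite !mulr0 addr0.
  by apply: cvgD; apply: cvgMl_tmp.
have hl0 : l = 0.
  exact: (@cvg_unique _ (@Rhausdorff R) _ _ l 0 (subseq_cvg _ _ _ hf hl) h0).
rewrite hl0 in hl.
exists x1, w1; split => //; split => xi.
  apply: (nm_cvg_pt _ Hp) => //.
  apply: (@squeeze_cvgr _ _ _ _ (fun=> 0) (fun k => Dz x1 w1 k / r)).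
  - near=> k; rewrite (nm_ge0 _ Hp) /= ler_pdivlMr // mulrC /Dz lerDl.
    by rewrite mulr_ge0 ?(nm_ge0 _ Hp) // invr_ge0 ltW.
  - exact: cvg_cst.
  - by rewrite -(mul0r r^-1); apply: cvgMr_tmp.
apply: (nm_cvg_pt _ Hp) => //.
apply: (@squeeze_cvgr _ _ _ _ (fun=> 0) (fun k => Dz x1 w1 k * r)).
- near=> k; rewrite (nm_ge0 _ Hp) /= -ler_pdivrMr // mulrC /Dz lerDr.
  by rewrite mulr_ge0 ?(nm_ge0 _ Hp) // ltW.
- exact: cvg_cst.
- by rewrite -(mul0r r); apply: cvgMr_tmp.
Unshelve. all: by end_near. Qed.

Lemma sol_basic (x1 w1 : L) : sol x1 w1 -> basic_SVI p NN C F x1.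
Proof.
move=> [hx [hw hc]]; split.
  by split => // xi; exact: (hc xi).1.
move=> y [hyC hyN].
have hd : NN (y - x1) by exact: (subspB _ _ _ HN).
have e : ip (- liftF F x1) (y - x1) = ip (- liftF F x1 - w1) (y - x1) + ip w1 (y - x1).
  by rewrite ipBl subrK.
rewrite e (ip_MN hw hd) addr0.
apply: sumr_le0 => xi _; rewrite !ffunE.
apply: mulr_ge0_le0; first exact: ltW.
exact: (hc xi).2.
Qed.
End Main.

Theorem corollary1 (R : realType) (Xi : finType) (N : nat) (E : 'I_N -> Type)
  (comp : Xi -> forall j : 'I_N, E j) (n : nat) (stage : 'I_n -> 'I_N)
  (p : Xi -> R) (C : Xi -> set 'rV[R]_n) (F : Xi -> 'rV[R]_n -> 'rV[R]_n)
  (PN PM : @Ln R n Xi -> @Ln R n Xi) (r sigbar theta : R)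
  (x w xh wh : nat -> @Ln R n Xi) (sig tau : nat -> R) :
  injective comp ->
  {homo stage : i j / (i <= j)%N} ->
  (forall xi, 0 < p xi) -> \sum_(xi : Xi) p xi = 1 ->
  (forall xi, C xi !=set0 /\ closed (C xi) /\ cvx_set (C xi)) ->
  (forall xi, continuous (F xi) /\ monotone_map (F xi)) ->
  0 < r ->
  is_orth_proj p (nonant comp stage) PN ->
  is_orth_proj p (orthL p (nonant comp stage)) PM ->
  (exists x0 w0, ext_SVI (nonant comp stage) (orthL p (nonant comp stage)) C F x0 w0) ->
  IPHA_run p (nonant comp stage) (orthL p (nonant comp stage)) PN PM C F r sigbar theta
    x w xh wh sig tau ->
  exists xs ws : @Ln R n Xi,
    [/\ forall xi, (fun k => x k xi) @ \oo --> xs xi,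
        forall xi, (fun k => w k xi) @ \oo --> ws xi,
        ext_SVI (nonant comp stage) (orthL p (nonant comp stage)) C F xs ws &
        basic_SVI p (nonant comp stage) C F xs].
Proof.
move=> _ _ Hp _ HC HF hr HPN HPM [x0 [w0 hext]] run.
have HN := nonant_subsp (R:=R) N E comp stage.
have HFm : forall xi, monotone_map (F xi) by move=> xi; exact: (HF xi).2.
have HFc : forall xi, continuous (F xi) by move=> xi; exact: (HF xi).1.
have HCc : forall xi, closed (C xi) by move=> xi; exact: (HC xi).2.1.
have [x1 [w1 [hs1 [hx hw]]]] :=
  ipha_conv _ Hp _ HN _ _ HPN HPM _ _ HFm _ _ _ hr _ _ _ _ _ _ run HCc HFc hext.
exists x1, w1; split => //.
exact: (sol_basic _ Hp _ HN _ _ _ _ hs1).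
Qed.
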